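(* Let $N\ge 4$. Let $q_1,\dots,q_N\in(0,1)$ and $p_{i,k}\in(0,1)$ ($1\le i\le N$, $1\le k\le N-1$) satisfy $p_{i,k}>p_{j,k}$ whenever $i<j$ (for each $k$) and $p_{i,k}<p_{i,l}$ whenever $k<l$ (for each $i$). Let $\mathcal F_N$ be the set of $(N-1)\times N$ matrices over $\mathrm{GF}(2)$ of the form $$\mathbf F=\begin{pmatrix}1&1&0&\cdots&0&0\\ 1&0&1&\cdots&0&0\\ \vdots&\vdots&\vdots&\ddots&\vdots&\vdots\\ 1&0&0&\cdots&1&0\\ u_1&u_2&u_3&\cdots&u_{N-1}&1\end{pmatrix},$$ i.e. for $1\le j\le N-2$ row $j$ has ones exactly in columns $1$ and $j+1$, and the last row is $(u_1,\dots,u_{N-1},1)$ with $u_k\in\mathrm{GF}(2)$ and $u_1\oplus u_2\oplus\cdots\oplus u_{N-1}=1$. Then every element of $\mathcal F_N$ is admissible, and the matrix $$\hat{\mathbf F}_N=\begin{pmatrix}1&1&0&\cdots&0\\ 1&0&1&\cdots&0\\ \vdots&\vdots&\vdots&\ddots&\vdots\\ 1&0&0&\cdots&1\end{pmatrix}_{(N-1)\times N}$$ (row $j$ has ones exactly in columns $1$ and $j+1$, $j=1,\dots,N-1$; this is the element of $\mathcal F_N$ with $u_1=1$, $u_2=\cdots=u_{N-1}=0$) is the unique minimizer of $P_e^U$ over $\mathcal F_N$: $P_e^U(\mathbf F)\ge P_e^U(\hat{\mathbf F}_N)$ for all $\mathbf F\in\mathcal F_N$, with equality only if $\mathbf F=\hat{\mathbf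 F}_N$.
   Context: An $(N-1)\times N$ matrix $\mathbf F$ over $\mathrm{GF}(2)$ is admissible if, for every $j\in\{1,\dots,N\}$, the $(N-1)\times(N-1)$ matrix $\mathbf F_j$ obtained by deleting the $j$-th column of $\mathbf F$ is invertible over $\mathrm{GF}(2)$. For admissible $\mathbf F$, let $\mathbf G_{i,k}$ be the $k$-th column of $\mathbf F_i^{-1}$ (over $\mathrm{GF}(2)$) and $|\mathbf G_{i,k}|$ its Hamming weight. Given numbers $q_k\in(0,1)$ and $p_{i,k}\in(0,1)$, define $$P_e^U(\mathbf F)=\frac1N\sum_{i=1}^N\Big[\sum_{k=1,k\neq i}^N q_k+(N-1)q_i+\sum_{k=1}^{N-1}p_{i,k}\,|\mathbf G_{i,k}|\Big].$$ The class $\mathcal F_N$ consists of the matrices obtained by appending a row and a column to the $(N-1)$-user design $\hat{\mathbf F}_{N-1}$ (placed in the upper-left corner) while keeping all $\mathbf F_j$ invertible. *)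

(* Defs.v *)
(* Conventions: N = n.+1, so matrices are 'M['F_2]_(n, n.+1);
   indices are 0-based: user i in 1..N is i : 'I_n.+1, k in 1..N-1 is k : 'I_n. *)
From HB Require Import structures.
From mathcomp Require Import all_boot all_order all_algebra.
Set Implicit Arguments. Unset Strict Implicit. Unset Printing Implicit Defensive.
Import Order.TTheory GRing.Theory Num.Theory.
Local Open Scope ring_scope.

Definition Fdel n (F : 'M['F_2]_(n, n.+1)) (j : 'I_n.+1) : 'M['F_2]_n := col' j F.

Definition admissible n (F : 'M['F_2]_(n, n.+1)) : Prop :=
  forall j : 'I_n.+1, Fdel F j \in unitmx.

Definition Gweight n (F : 'M['F_2]_(n, n.+1)) (i : 'I_n.+1) (k : 'I_n) : nat :=
  #|[set r : 'I_n | invmx (Fdel F i) r k != 0]|.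

Definition PeU (R : realFieldType) n (q : 'I_n.+1 -> R) (p : 'I_n.+1 -> 'I_n -> R)
    (F : 'M['F_2]_(n, n.+1)) : R :=
  (n.+1)%:R^-1 * \sum_(i < n.+1)
     ((\sum_(k < n.+1 | k != i) q k) + n%:R * q i
      + \sum_(k < n) p i k * (Gweight F i k)%:R).

Definition FN_mat n (u : 'I_n -> 'F_2) : 'M['F_2]_(n, n.+1) :=
  \matrix_(i < n, j < n.+1)
    if (i.+1 < n)%N then ((j == 0 :> nat) || (j == i.+1 :> nat))%:R
    else match unlift ord_max j with Some k => u k | None => 1 end.

Definition inFN n (F : 'M['F_2]_(n, n.+1)) : Prop :=
  exists u : 'I_n -> 'F_2, \sum_(k < n) u k = 1 /\ F = FN_mat u.

Definition Fhat n : 'M['F_2]_(n, n.+1) :=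
  \matrix_(i < n, j < n.+1) ((j == 0 :> nat) || (j == i.+1 :> nat))%:R.

(* Main.v *)
Require Import Defs.
From HB Require Import structures.
From mathcomp Require Import all_boot all_order all_algebra.
From mathcomp Require Import zify ring lra.
Set Implicit Arguments. Unset Strict Implicit. Unset Printing Implicit Defensive.
Import Order.TTheory GRing.Theory Num.Theory.
Local Open Scope ring_scope.

Lemma F2c (x : 'F_2) : x = 0 \/ x = 1.
Proof. case: x => [[|[|m]]] Hm. left; exact/val_inj. right; exact/val_inj. done. Qed.

Lemma F2xx (x : 'F_2) : x + x = 0.
Proof. by case: (F2c x) => ->; [rewrite addr0 | exact/val_inj]. Qed.

Lemma F2b (a b : bool) : (a%:R + b%:R : 'F_2) = (a (+) b)%:R.
Proof. by case: a; case: b => //=; rewrite ?addr0 ?add0r // F2xx. Qed.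

Lemma F2nz (a : bool) : ((a%:R : 'F_2) != 0) = a.
Proof. by case: a => //=; rewrite oner_eq0. Qed.

Lemma sum_delta m (f : 'I_m -> 'F_2) (t : 'I_m) :
  \sum_c f c * (c == t)%:R = f t.
Proof.
rewrite (bigD1 t) //= eqxx mulr1 big1 ?addr0 // => c /negbTE ->.
by rewrite mulr0.
Qed.

Section S.
Variables (n : nat) (u : 'I_n -> 'F_2).

Definition tk (k : 'I_n) : 'I_n.+1 := lift ord0 k.
Definition bk (k : 'I_n) : 'F_2 :=
  match unlift ord_max (tk k) with Some m => u m | None => 0 end.
Definition vv (k : 'I_n) (c : 'I_n.+1) : 'F_2 :=
  (c == tk k)%:R + bk k * (c == ord_max)%:R.
Definition yy (j : 'I_n.+1) (k : 'I_n) (c : 'I_n.+1) : 'F_2 := vv k c + vv k j.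

Lemma yy_j j k : yy j k j = 0.
Proof. exact: F2xx. Qed.

Lemma FN_v (a k : 'I_n) : \sum_c FN_mat u a c * vv k c = (a == k)%:R.
Proof.
rewrite /vv; under eq_bigr => c _ do rewrite mulrDr mulrCA.
rewrite big_split /= -mulr_sumr !sum_delta !mxE.
case: ifP => ha.
  rewrite /tk /= /bump /= add1n eqSS eq_sym.
  have -> : (n == 0)%N || (n == a.+1)%N = false by apply/negbTE; lia.
  by rewrite mulr0n [X in _ + X]mulr0 addr0.
rewrite unlift_none mulr1 /bk.
case: unliftP => [m hm|hm].
  rewrite F2xx; case: eqP => // ak; subst.
  exfalso; move/negbT: ha; rewrite -leqNgt => ha.
  have : (tk k : nat) = lift ord_max m by rewrite hm.
  rewrite /tk lift0 /= /bump leqNgt ltn_ord /= add0n => e.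
  have := ltn_ord m; rewrite -e; move: (ltn_ord k); lia.
rewrite addr0; case: eqP => // ak.
exfalso; apply: ak; apply/val_inj => /=.
have : (tk k : nat) = n by rewrite hm.
rewrite /tk lift0 /= => e; move/negbT: ha; rewrite -leqNgt.
move: (ltn_ord a); lia.
Qed.

Lemma FN_rowsum (hu : \sum_k u k = 1) (a : 'I_n) : \sum_c FN_mat u a c = 0.
Proof.
under eq_bigr => c _ do rewrite mxE.
case hb: (a.+1 < n)%N; rewrite ?hb.
  rewrite (bigD1 (ord0 : 'I_n.+1)) //= (bigD1 (lift ord0 a)) //= big1.
    by rewrite /bump /= add1n eqxx addr0; exact: F2xx.
  move=> c /andP [h1 h2].
  by move: h1 h2; rewrite -!val_eqE /= /bump /= add1n => /negbTE -> /negbTE ->.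
rewrite (bigD1_ord ord_max) //= unlift_none.
under eq_bigr => c _ do rewrite liftK.
by rewrite hu F2xx.
Qed.

Lemma FN_y (hu : \sum_k u k = 1) (a k : 'I_n) j :
  \sum_c FN_mat u a c * yy j k c = (a == k)%:R.
Proof.
rewrite /yy; under eq_bigr => c _ do rewrite mulrDr.
by rewrite big_split /= FN_v -mulr_suml FN_rowsum // mul0r addr0.
Qed.

Definition Bm (j : 'I_n.+1) : 'M['F_2]_n := \matrix_(r < n, k < n) yy j k (lift j r).

Lemma FdelB (hu : \sum_k u k = 1) j : Fdel (FN_mat u) j *m Bm j = 1%:M.
Proof.
apply/matrixP => a k; rewrite !mxE.
have := FN_y hu a k j; rewrite (bigD1_ord j) //= yy_j mulr0 add0r => <-.
by apply: eq_bigr => r _; rewrite !mxE.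
Qed.

Lemma inv_FN (hu : \sum_k u k = 1) j :
  Fdel (FN_mat u) j \in unitmx /\ invmx (Fdel (FN_mat u) j) = Bm j.
Proof.
have h := FdelB hu j; have [U _] := mulmx1_unit h; split => //.
by rewrite -[RHS](mulKmx U) h mulmx1.
Qed.

Definition Wt (j : 'I_n.+1) (k : 'I_n) : nat :=
  if bk k == 1 then (if (j == tk k) || (j == ord_max) then n.-1 else 2%N)
  else (if j == tk k then n else 1%N).

Lemma card_lift (f : 'I_n.+1 -> 'F_2) j : f j = 0 ->
  #|[set r : 'I_n | f (lift j r) != 0]| = #|[set c | f c != 0]|.
Proof.
move=> fj; rewrite (_ : [set c | f c != 0] = lift j @: [set r : 'I_n | f (lift j r) != 0]).
  by rewrite card_imset //; exact: lift_inj.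
apply/setP => c; rewrite inE; case: (unliftP j c) => [r ->|->].
  by rewrite mem_imset ?inE //; exact: lift_inj.
rewrite fj eqxx; apply/esym/negbTE/imsetP => [[r _ /eqP]].
by rewrite (negbTE (neq_lift _ _)).
Qed.

Lemma bk01 k : bk k = 0 \/ (bk k = 1 /\ tk k != ord_max).
Proof.
rewrite /bk; case: unliftP => [m hm|hm]; last by left.
case: (F2c (u m)) => ->; [by left | right; split => //].
by rewrite hm eq_sym neq_lift.
Qed.

Lemma yy_bool j k (bb : bool) : bk k = bb%:R -> forall c,
  yy j k c = (((c == tk k) (+) (bb && (c == ord_max))) (+)
              ((j == tk k) (+) (bb && (j == ord_max))))%:R.
Proof.
move=> hb c; rewrite /yy /vv hb.
have E (b x : bool) : (b%:R * x%:R : 'F_2) = (b && x)%:R by case: b; rewrite ?mul1r ?mul0r.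
by rewrite !E !F2b.
Qed.

Lemma Wt_ok j k : #|[set r : 'I_n | yy j k (lift j r) != 0]| = Wt j k.
Proof.
rewrite card_lift ?yy_j // /Wt.
case: (bk01 k) => [hb|[hb tm]].
  have hb' : bk k = false%:R by rewrite hb.
  rewrite hb (_ : ((0 : 'F_2) == 1) = false); last by rewrite eq_sym oner_eq0.
  under eq_finset => c do rewrite (yy_bool j hb') F2nz /= !addbF.
  have [jt|jt] := eqVneq j (tk k).
    subst j.
    under eq_finset => c do rewrite addbT.
    rewrite (_ : [set c | _] = [set~ tk k]) ?cardsC1 ?card_ord //.
    by apply/setP => c; rewrite !inE.
  rewrite (_ : [set c | _] = [set tk k]) ?cards1 //.
  by apply/setP => c; rewrite !inE addbF.
have hb' : bk k = true%:R by rewrite hb.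
rewrite hb eqxx.
under eq_finset => c do rewrite (yy_bool j hb') F2nz /=.
have key c : (c == tk k) (+) (c == ord_max) = (c == tk k) || (c == ord_max).
  by case: (eqVneq c (tk k)) => [->|//]; rewrite (negbTE tm).
under eq_finset => c do rewrite !key.
case: ifP => hj.
  under eq_finset => c do rewrite addbT.
  have hC := cardsC [set tk k; ord_max]; rewrite cards2 tm card_ord in hC.
  rewrite (_ : [set c | _] = ~: [set tk k; ord_max]); last first.
    by apply/setP => c; rewrite !inE.
  move: hC; lia.
under eq_finset => c do rewrite addbF.
rewrite (_ : [set c | _] = [set tk k; ord_max]) ?cards2 ?tm //.
by apply/setP => c; rewrite !inE.
Qed.

Lemma Gweight_FN (hu : \sum_k u k = 1) j k : Gweight (FN_mat u) j k = Wt j k.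
Proof.
rewrite /Gweight (inv_FN hu j).2 -Wt_ok; apply: eq_card => r; by rewrite !inE mxE.

Qed.
End S.

Definition ee n : 'I_n -> 'F_2 := fun k => ((k : nat) == 0%N)%:R.

Lemma tk_val n (k : 'I_n) : (tk k : nat) = k.+1.
Proof. by rewrite /tk /= /bump /= add1n. Qed.

Lemma bk_ee n k : bk (@ee n) k = 0.
Proof.
rewrite /bk; case: unliftP => [m hm|//].
have : (tk k : nat) = lift ord_max m by rewrite hm.
rewrite tk_val /= /bump leqNgt ltn_ord /= add0n => e.
by rewrite /ee -e.
Qed.

Lemma sum_ee n : (0 < n)%N -> \sum_k @ee n k = 1.
Proof.
move=> hn; rewrite (bigD1 (Ordinal hn)) //= big1 ?addr0 //.
move=> i; rewrite -val_eqE /= /ee => /negbTE -> //.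
Qed.

Lemma hat_eq n : Fhat n = FN_mat (@ee n).
Proof.
apply/matrixP => a b; rewrite !mxE.
case: ifP => // ha.
case: unliftP => [m ->|->].
  rewrite /ee /= /bump leqNgt ltn_ord /= add0n.
  have -> : (m == a.+1 :> nat) = false.
    apply/negbTE; move: (ltn_ord m) (ltn_ord a) ha; lia.
  by rewrite orbF.
have E : (n == a.+1)%N by apply/eqP; move: (ltn_ord a) ha; lia.
by rewrite /= E orbT.
Qed.

Lemma Wt_ee n j k : Wt (@ee n) j k = if j == tk k then n else 1%N.
Proof.
by rewrite /Wt bk_ee (_ : ((0 : 'F_2) == 1) = false) // eq_sym oner_eq0.
Qed.

Section Cmp.
Variables (R : realFieldType) (n : nat) (hn : (3 <= n)%N) (P : 'I_n.+1 -> R).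
Hypothesis (hP : forall i, 0 < P i).

Lemma colcmp (u : 'I_n -> 'F_2) k (h0 : P (tk k) < P ord0) :
  \sum_j P j * (Wt (@ee n) j k)%:R <= \sum_j P j * (Wt u j k)%:R /\
  (bk u k = 1 -> \sum_j P j * (Wt (@ee n) j k)%:R < \sum_j P j * (Wt u j k)%:R).
Proof.
case: (bk01 u k) => [hb|[hb tm]].
  split; last by rewrite hb => /eqP; rewrite eq_sym oner_eq0.
  rewrite le_eqVlt; apply/orP; left; apply/eqP/eq_bigr => j _; rewrite Wt_ee /Wt hb.
  by rewrite (_ : ((0 : 'F_2) == 1) = false) // eq_sym oner_eq0.
suff lt : \sum_j P j * (Wt (@ee n) j k)%:R < \sum_j P j * (Wt u j k)%:R.
  by split => //; apply: ltW.
have WtU j : Wt u j k = if (j == tk k) || (j == ord_max) then n.-1 else 2%N.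
  by rewrite /Wt hb eqxx.
rewrite -subr_gt0 -sumrB.
under eq_bigr => j _ do rewrite (WtU j) (Wt_ee j k).
have t0 : ord0 != tk k by rewrite -val_eqE /= /tk /= /bump.
have m0 : (ord0 : 'I_n.+1) != ord_max by rewrite -val_eqE /=; lia.
rewrite (bigD1 (tk k)) //= (bigD1 ord0) //=.
rewrite eqxx /= (negbTE m0).
rewrite -!mulrBr.
have e : n = (n.-1).+1 by lia.
have -> : ((n.-1)%:R - n%:R : R) = -1.
  by rewrite [in X in _ - X]e -natr1 opprD addrA subrr add0r.
rewrite mulr2n addrK.
set S := \sum_(i | _) _.
have : 0 <= S.
  apply: sumr_ge0 => j /andP [jt j0].
  rewrite (negbTE jt) /= -mulrBr; apply: mulr_ge0; first exact: ltW.
  rewrite subr_ge0 ler_nat; case: ifP => //; lia.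
move: h0; lra.
Qed.
End Cmp.
Unset Implicit Arguments. Set Strict Implicit. Set Printing Implicit Defensive.

Theorem theorem6 (R : realFieldType) (n : nat) (hn : (3 <= n)%N)
  (q : 'I_n.+1 -> R) (p : 'I_n.+1 -> 'I_n -> R)
  (hq : forall k, 0 < q k < 1)
  (hp : forall i k, 0 < p i k < 1)
  (hpi : forall (i j : 'I_n.+1) (k : 'I_n), (i < j)%N -> p j k < p i k)
  (hpk : forall (i : 'I_n.+1) (k l : 'I_n), (k < l)%N -> p i k < p i l) :
  (forall F : 'M['F_2]_(n, n.+1), inFN F -> admissible F) /\
  inFN (Fhat n) /\
  (forall F : 'M['F_2]_(n, n.+1), inFN F ->
     PeU q p (Fhat n) <= PeU q p F /\ (PeU q p F = PeU q p (Fhat n) -> F = Fhat n)).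
Proof.
have hee : \sum_k @ee n k = 1 by apply: sum_ee; lia.
split; first by move=> F [u [hu ->]] j; exact: (inv_FN hu j).1.
split; first by exists (@ee n); split => //; exact: hat_eq.
move=> F [u [hu ->]].
pose Q (i : 'I_n.+1) := (\sum_(k < n.+1 | k != i) q k) + n%:R * q i.
pose T (v : 'I_n -> 'F_2) := \sum_k \sum_i p i k * (Wt v i k)%:R.
have PeUE v : \sum_k v k = 1 ->
    PeU q p (FN_mat v) = (n.+1)%:R^-1 * (\sum_i Q i + T v).
  move=> hv; rewrite /PeU big_split /= /T exchange_big /=; congr (_ * (_ + _)).
  apply: eq_bigr => k _; apply: eq_bigr => i _.
  by rewrite Gweight_FN.
have cmp k := colcmp (P := fun j => p j k) hn (fun i => (andP (hp i k)).1) u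
   (hpi ord0 (tk k) k (ltn0Sn _)).
have le : T (@ee n) <= T u by apply: ler_sum => k _; exact: (cmp k).1.
have c0 : 0 < (n.+1)%:R^-1 :> R by rewrite invr_gt0 ltr0Sn.
rewrite hat_eq !PeUE //; split.
  by rewrite ler_pM2l // lerD2l.
move=> /(mulfI (lt0r_neq0 c0)) /addrI eqT.
have bk0 k : bk u k = 0.
  case: (bk01 u k) => [//|[hb _]].
  have : T (@ee n) < T u.
    rewrite /T (bigD1 k) //= [X in _ < X](bigD1 k) //=.
    by apply: ltr_leD; [exact: (cmp k).2 | apply: ler_sum => j _; exact: (cmp j).1].
  by rewrite eqT ltxx.
have hue (m : 'I_n) : (m : nat) != 0%N -> u m = 0.
  move=> m0; have hk : (m.-1 < n)%N by move: (ltn_ord m); lia.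
  rewrite -(bk0 (Ordinal hk)) /bk; case: unliftP => [m' hm'|hm'].
    have : (tk (Ordinal hk) : nat) = lift ord_max m' by rewrite hm'.
    rewrite tk_val /= /bump leqNgt ltn_ord /= add0n => e.
    by congr (u _); apply/val_inj => /=; move: e m0; lia.
  have : (tk (Ordinal hk) : nat) = n by rewrite hm'.
  rewrite tk_val /= => e; move: (ltn_ord m) m0 e; lia.
have hue' (m : 'I_n) : u m = @ee n m.
  rewrite /ee; case: eqP => [m0|/eqP m0]; last by rewrite hue.
  have hn0 : (0 < n)%N by lia.
  move: hu; rewrite (bigD1 (Ordinal hn0)) //= big1 ?addr0.
    by move=> <-; congr (u _); apply/val_inj.
  by move=> i; rewrite -val_eqE /= => /hue.
apply/matrixP => a b; rewrite !mxE.
by case: ifP => // _; case: unlift => // m; rewrite hue'.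
Qed.
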